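(* Let $r>0$, $V_T>0$ and $R_0\ge r$. Define $$f(t,V_s)=1+\frac{1}{2R_0(R_0+r)}\left(r^2-V_T^2\left(\frac{2\pi R_0}{V_s}+t\right)^2\right)-\cos\!\left(\frac{V_s t}{R_0}\right)$$ and $$V_c=\frac{\left(2\pi+\arcsin\frac{r}{R_0}\right)R_0V_T}{r}.$$ Then the minimum of $t\mapsto f(t,V_c)$ over $0\le t\le \frac{\pi R_0}{2V_c}$ is strictly positive, that is, $f(t^*,V_c)>0$ at the minimizer $t^*$. In particular $f(t,V_c)\ge 0$ for all $t\in\left[0,\frac{\pi R_0}{2V_c}\right]$.
   Context: $R_0$ is the initial radius of the disk containing the evaders, $2r$ is the length of the sweeper's line sensor, $V_T$ is the maximal evader speed, and $V_c$ is a candidate sweeper speed. The condition $f(t,V_s)\ge 0$ for $0\le t\le \pi R_0/(2V_s)$ is the paper's criterion for the sweeper to be fast enough to accomplish the confinement task. *)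

(* Defs.v *)
From Stdlib Require Import Reals.
Open Scope R_scope.

Definition fsweep (r VT R0 t Vs : R) : R :=
  1 + (r ^ 2 - VT ^ 2 * (2 * PI * R0 / Vs + t) ^ 2) / (2 * R0 * (R0 + r))
    - cos (Vs * t / R0).

Definition Vc (r VT R0 : R) : R := (2 * PI + asin (r / R0)) * R0 * VT / r.

(* Main.v *)
Require Import Defs.
From Stdlib Require Import Reals Lra.
Open Scope R_scope.

Lemma my_div_le a b : 0 <= a -> 0 < b -> 0 <= a / b.
Proof. intros. apply Rmult_le_pos; [lra| left; apply Rinv_0_lt_compat; lra]. Qed.

Lemma cos_ub2 s : 0 <= s <= PI/2 -> cos s <= 1 - s^2/2 + s^4/24.
Proof.
  intros Hs. pose proof PI_RGT_0.
  destruct (cos_bound s 0) as [_ H2]; try lra.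
  replace (1 - s^2/2 + s^4/24) with (cos_approx s (2*(0+1))); [exact H2|].
  unfold cos_approx, cos_term. simpl. field.
Qed.

Lemma core (r R0 a s : R) : 0 < r -> r <= R0 -> 0 < a -> r < a * R0 -> a <= PI/2 ->
  0 <= s <= PI/2 ->
  0 < 1 - cos s + (r^2 - r^2 * ((2*PI+s)/(2*PI+a))^2)/(2*R0*(R0+r)).
Proof.
  intros Hr HR Ha Hra HaP Hs.
  pose proof PI_RGT_0 as HPI. pose proof PI2_3_2 as HP2. pose proof PI_4 as HP4.
  pose proof (cos_ub2 s Hs) as Hc.
  assert (HD : 0 < 2*R0*(R0+r)) by nra.
  set (x := (2*PI+s)/(2*PI+a)).
  assert (Hx : x * (2*PI+a) = 2*PI+s) by (unfold x; field; lra).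
  destruct (Rle_or_lt s a) as [Hsa|Hsa].
  - assert (Hx1 : x <= 1) by nra.
    assert (Hx0 : 0 < x) by nra.
    assert (HN : 0 <= (r^2 - r^2 * x^2)/(2*R0*(R0+r))).
    { assert (x^2 <= 1) by nra. apply my_div_le; [nra|lra]. }
    destruct (Req_dec s 0) as [E|E].
    + subst s. rewrite cos_0.
      assert (x < 1) by nra.
      assert (x^2 < 1) by nra.
      assert (0 < (r^2 - r^2 * x^2)/(2*R0*(R0+r))).
      { assert (0 < r^2) by nra. assert (0 < r^2 * (1 - x^2)) by (apply Rmult_lt_0_compat; lra).
        apply Rdiv_lt_0_compat; [nra|lra]. }
      lra.
    + assert (cos s < 1).
      { assert (0 < s) by lra. assert (s^2 <= 4) by nra. assert (0 < s^2) by nra.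
        assert (s^2/2 - s^4/24 > 0) by nra. lra. }
      lra.
  - assert (Hx1 : 1 < x) by nra.
    assert (Hx2 : x <= 5/4) by nra.
    assert (Hrs : r < s * R0) by nra.
    assert (Hb : (r^2 - r^2 * x^2)/(2*R0*(R0+r)) >= - (9/32) * s^2).
    { assert (r^2 <= s^2 * R0^2) by nra.
      assert (x^2 - 1 <= 9/16) by nra.
      assert (r^2 * (x^2-1) <= s^2*R0^2*(9/16)) by nra.
      assert (r^2 - r^2 * x^2 >= (- (9/32) * s^2) * (2*R0*(R0+r))) by nra.
      replace (- (9/32) * s^2) with ((- (9/32) * s^2) * (2*R0*(R0+r)) / (2*R0*(R0+r))) by (field; lra).
      apply Rle_ge. unfold Rdiv. apply Rmult_le_compat_r; [left; apply Rinv_0_lt_compat; lra| lra]. }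
    assert (0 < s) by lra. assert (s^2 <= 4) by nra. assert (0 < s^2) by nra.
    assert (s^2 * (7/32 - s^2/24) > 0) by (apply Rmult_lt_0_compat; lra).
    nra.
Qed.

Theorem theorem5 (r VT R0 : R) (hr : 0 < r) (hVT : 0 < VT) (hR0 : r <= R0) :
  (exists tstar : R,
      0 <= tstar <= PI * R0 / (2 * Vc r VT R0) /\
      (forall t : R, 0 <= t <= PI * R0 / (2 * Vc r VT R0) ->
         fsweep r VT R0 tstar (Vc r VT R0) <= fsweep r VT R0 t (Vc r VT R0)) /\
      0 < fsweep r VT R0 tstar (Vc r VT R0)) /\
  (forall t : R, 0 <= t <= PI * R0 / (2 * Vc r VT R0) ->
     0 <= fsweep r VT R0 t (Vc r VT R0)).
Proof.
  pose proof PI_RGT_0 as HPI.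
  assert (HR0 : 0 < R0) by lra.
  set (k := r / R0).
  assert (Hk : 0 < k <= 1).
  { unfold k; split; [apply Rdiv_lt_0_compat; lra|].
    apply (Rmult_le_reg_r R0); [lra|]. unfold Rdiv. rewrite Rmult_assoc, Rinv_l; lra. }
  set (a := asin k).
  assert (Hsa : sin a = k) by (apply sin_asin; lra).
  pose proof (asin_bound k) as Hab. fold a in Hab.
  assert (Ha : 0 < a).
  { destruct (Rlt_or_le 0 a) as [h|h]; auto.
    assert (sin a <= sin 0) by (apply sin_incr_1; lra). rewrite sin_0 in *. lra. }
  assert (Hka : k < a) by (rewrite <- Hsa; apply sin_lt_x; auto).
  assert (Hra : r < a * R0).
  { replace r with (k * R0) by (unfold k; field; lra). nra. }
  assert (HV : Vc r VT R0 = (2*PI + a) * R0 * VT / r) by reflexivity.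
  assert (HVp : 0 < Vc r VT R0).
  { rewrite HV. apply Rdiv_lt_0_compat; auto. apply Rmult_lt_0_compat; [|lra].
    apply Rmult_lt_0_compat; lra. }
  assert (Hpos : forall t, 0 <= t <= PI * R0 / (2 * Vc r VT R0) ->
            0 < fsweep r VT R0 t (Vc r VT R0)).
  { intros t Ht. set (V := Vc r VT R0) in *. set (s := V * t / R0).
    assert (Hs : 0 <= s <= PI/2).
    { unfold s; split.
      - apply Rmult_le_pos; [apply Rmult_le_pos; lra | left; apply Rinv_0_lt_compat; lra].
      - destruct Ht as [_ Ht].
        apply (Rmult_le_reg_r (R0 / V)). apply Rdiv_lt_0_compat; lra.
        replace (V * t / R0 * (R0 / V)) with t by (field; lra).
        replace (PI / 2 * (R0 / V)) with (PI * R0 / (2 * V)) by (field; lra). lra. }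
    pose proof (core r R0 a s hr hR0 Ha Hra (proj2 Hab) Hs) as Hc.
    replace (fsweep r VT R0 t V) with
      (1 - cos s + (r^2 - r^2 * ((2*PI+s)/(2*PI+a))^2)/(2*R0*(R0+r))); [exact Hc|].
    unfold fsweep. fold s.
    replace (VT ^ 2 * (2 * PI * R0 / V + t) ^ 2) with (r ^ 2 * ((2 * PI + s) / (2 * PI + a)) ^ 2).
    ring.
    unfold s. rewrite HV. field. repeat split; lra. }
  split.
  - set (b := PI * R0 / (2 * Vc r VT R0)).
    assert (Hb : 0 <= b).
    { unfold b. apply my_div_le; [nra | lra]. }
    destruct (continuity_ab_min (fun t => fsweep r VT R0 t (Vc r VT R0)) 0 b Hb)
      as [m [Hm1 Hm2]].
    + intros c _. unfold fsweep. reg.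
    + exists m. split; [exact Hm2|]. split; [exact Hm1|]. apply Hpos; exact Hm2.
  - intros t Ht. left. apply Hpos; exact Ht.
Qed.
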